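(* Let $(\mathfrak g,\mu,P)$ be a Nijenhuis Lie algebra and $(M,P_M)$ a Nijenhuis representation over it. Then the map $\Psi_M:\mathrm C^\bullet_{\mathrm{Lie}}(\mathfrak g,M)\to\mathrm C^\bullet_{\mathrm{NjO}}(\mathfrak g,M)$ is a chain map, i.e. $\Psi_M\circ\delta_{\mathrm{Lie},M}=\delta_{\mathrm{NjO},M}\circ\Psi_M$.
   Context: All vector spaces are over a field $\mathbf k$ of characteristic $0$. A Nijenhuis Lie algebra is a Lie algebra $(\mathfrak g,\mu=[-,-]_\mu)$ with linear $P:\mathfrak g\to\mathfrak g$ satisfying $[Pa,Pb]_\mu=P([Pa,b]_\mu+[a,Pb]_\mu-P[a,b]_\mu)$. A Nijenhuis representation is a Lie algebra representation $M$ of $(\mathfrak g,\mu)$ (action $ax$) with linear $P_M:M\to M$ such that $P(a)P_M(x)=P_M(P(a)x+aP_M(x)-P_M(ax))$. Chevalley–Eilenberg complex: $\mathrm C^n_{\mathrm{Lie}}(\mathfrak g,M)=\mathrm{Hom}(\wedge^n\mathfrak g,M)$, $\delta_{\mathrm{Lie},M}(f)(a_1,\dots,a_{n+1})=\sum_i(-1)^{i-1}a_if(\dots,\widehat{a_i},\dots)+\sum_{i<j}(-1)^{i+j}f([a_i,a_j]_\mu,\dots,\widehat{a_i},\dots,\widehat{a_j},\dots)$. With $[a,b]_P:=[Pa,b]_\mu+[a,Pb]_\mu-P[a,b]_\mu$, let $\partial$ be the Chevalley–Eilenberg differential of $[-,-]_P$ with coefficients in $M$ with action $a\rhd x:=P(a)x$,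 i.e. $\partial(f)(a_1,\dots,a_{n+1})=\sum_i(-1)^{i-1}P(a_i)f(\dots,\widehat{a_i},\dots)+\sum_{i<j}(-1)^{i+j}f([a_i,a_j]_P,\dots,\widehat{a_i},\dots,\widehat{a_j},\dots)$. Then $\mathrm C^n_{\mathrm{NjO}}(\mathfrak g,M):=\mathrm{Hom}(\wedge^n\mathfrak g,M)$ with $\delta_{\mathrm{NjO},M}(f):=-P_M\circ\delta_{\mathrm{Lie},M}(f)+\partial(f)$. The map $\Psi_M$ is $\mathrm{Id}_M$ in degree $0$, and for $n\ge1$, $f\in\mathrm C^n_{\mathrm{Lie}}(\mathfrak g,M)$: $\Psi_M(f)(a_1,\dots,a_n)=\sum_{k=0}^n\sum_{1\le i_1<\dots<i_k\le n}(-1)^{n-k}P_M^{\,n-k}\big(f(a_1,\dots,P(a_{i_1}),\dots,P(a_{i_k}),\dots,a_n)\big)$, where $P$ is applied exactly to the arguments in positions $i_1,\dots,i_k$. *)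

(* Defs.v *)
From HB Require Import structures.
From mathcomp Require Import all_boot all_order all_algebra.
Set Implicit Arguments. Unset Strict Implicit. Unset Printing Implicit Defensive.
Import Order.TTheory GRing.Theory Num.Theory.
Local Open Scope ring_scope.

(* Cochains of degree n are functions  f : seq g -> M  of which only the
   values on lists of length n matter; Hom(wedge^n g, M) = multilinear,
   alternating such maps.  Positions are 0-indexed. *)

Section Nijenhuis.
Variable k : fieldType.

Definition lin_map (U V : lmodType k) (F : U -> V) :=
  forall (a : k) (u v : U), F (a *: u + v) = a *: F u + F v.

Definition bilin_map (U V W : lmodType k) (b : U -> V -> W) :=
  (forall u, lin_map (b u)) /\ (forall v, lin_map (fun u => b u v)).

Variables (g M : lmodType k).

Definition is_lie_algebra (mu : g -> g -> g) :=
  [/\ bilin_map mu, (forall a, mu a a = 0) &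
      (forall a b c, mu a (mu b c) + mu b (mu c a) + mu c (mu a b) = 0)].

Definition is_lie_rep (mu : g -> g -> g) (act : g -> M -> M) :=
  bilin_map act /\
  (forall a b x, act (mu a b) x = act a (act b x) - act b (act a x)).

Definition is_nijenhuis (mu : g -> g -> g) (P : g -> g) :=
  forall a b, mu (P a) (P b) = P (mu (P a) b + mu a (P b) - P (mu a b)).

Definition is_nijenhuis_rep (act : g -> M -> M) (P : g -> g) (PM : M -> M) :=
  forall a x, act (P a) (PM x) = PM (act (P a) x + act a (PM x) - PM (act a x)).

Definition bracketP (mu : g -> g -> g) (P : g -> g) (a b : g) :=
  mu (P a) b + mu a (P b) - P (mu a b).

Definition multilinear (n : nat) (f : seq g -> M) :=
  forall s t : seq g, (size s + (size t).+1)%N = n ->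
    lin_map (fun v => f (s ++ v :: t)).

Definition alternating (n : nat) (f : seq g -> M) :=
  forall (s : seq g) (i j : nat), size s = n -> (i < j < n)%N ->
    s`_i = s`_j -> f s = 0.

Definition del1 (i : nat) (s : seq g) : seq g :=
  [seq s`_l | l <- iota 0 (size s) & l != i].
Definition del2 (i j : nat) (s : seq g) : seq g :=
  [seq s`_l | l <- iota 0 (size s) & (l != i) && (l != j)].

(* Chevalley-Eilenberg differential of bracket br with action act
   (0-indexed: (-1)^(i-1) becomes (-1)^i, (-1)^(i+j) is unchanged) *)
Definition CE_diff (br : g -> g -> g) (act : g -> M -> M)
    (f : seq g -> M) (s : seq g) : M :=
  \sum_(i < size s) (-1) ^+ i *: act s`_i (f (del1 i s))
  + \sum_(i < size s) \sum_(j < size s | (i < j)%N)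
      (-1) ^+ (i + j) *: f (br s`_i s`_j :: del2 i j s).

Definition delta_Lie (mu : g -> g -> g) (act : g -> M -> M) := CE_diff mu act.

Definition partialP (mu : g -> g -> g) (act : g -> M -> M) (P : g -> g) :=
  CE_diff (bracketP mu P) (fun a x => act (P a) x).

Definition delta_NjO (mu : g -> g -> g) (act : g -> M -> M) (P : g -> g)
    (PM : M -> M) (f : seq g -> M) (s : seq g) : M :=
  - PM (delta_Lie mu act f s) + partialP mu act P f s.

Definition applyP (P : g -> g) (s : seq g) (S : {set 'I_(size s)}) : seq g :=
  [seq (if i \in S then P s`_i else s`_i) | i <- enum 'I_(size s)].

(* Psi_M (degree n = size of the argument list; degree 0 gives Id) *)
Definition PsiM (P : g -> g) (PM : M -> M) (f : seq g -> M) (s : seq g) : M :=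
  \sum_(S : {set 'I_(size s)})
    (-1) ^+ (size s - #|S|) *: iter (size s - #|S|) PM (f (applyP P S)).

End Nijenhuis.

(* Main.v *)
Require Import Defs.
From HB Require Import structures.
From mathcomp Require Import all_boot all_order all_algebra.
Set Implicit Arguments. Unset Strict Implicit. Unset Printing Implicit Defensive.
Import GRing.Theory.
Local Open Scope ring_scope.

Section Del.
Variable k : fieldType.
Variables (g : lmodType k).

Definition delP (p : nat -> bool) (s : seq g) : seq g :=
  [seq s`_l | l <- iota 0 (size s) & p l].

Lemma delP_cons p x (u : seq g) :
  delP p (x :: u) = if p 0%N then x :: delP (fun l => p l.+1) u else delP (fun l => p l.+1) u.
Proof.
rewrite /delP /= (iotaDl 1 0) filter_map.
case: (p 0%N) => /=; [congr (_ :: _)|]; rewrite -map_comp; apply: eq_map => l //=.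
Qed.

Lemma delP_ext p q (s : seq g) : p =1 q -> delP p s = delP q s.
Proof. by move=> H; rewrite /delP (eq_filter H). Qed.

Lemma delP_true (s : seq g) : delP (fun _ => true) s = s.
Proof. by elim: s => [|x u IH] //; rewrite delP_cons IH. Qed.

Lemma del1_0 x (u : seq g) : del1 0 (x :: u) = u.
Proof.
rewrite (_ : del1 0 (x :: u) = delP (fun l => l != 0%N) (x :: u)) // delP_cons /=.
by rewrite -[RHS]delP_true; apply: delP_ext.
Qed.

Lemma del1_S i x (u : seq g) : del1 i.+1 (x :: u) = x :: del1 i u.
Proof.
rewrite (_ : del1 i.+1 (x :: u) = delP (fun l => l != i.+1) (x :: u)) // delP_cons /=.
by congr (_ :: _); apply: delP_ext => l /=; rewrite eqSS.
Qed.

Lemma del2_del1 (s : seq g) i j : (i < j)%N -> del2 i j s = del1 i (del1 j s).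
Proof.
elim: s i j => [|x u IH] i [|j] //= Hij.
rewrite (_ : del2 i j.+1 (x :: u) = delP (fun l => (l != i) && (l != j.+1)) (x :: u)) //.
rewrite delP_cons del1_S; case: i Hij => [|i] Hij /=.
  rewrite del1_0; apply: delP_ext => l /=; by rewrite eqSS.
rewrite del1_S -IH //; congr (_ :: _); apply: delP_ext => l /=; by rewrite !eqSS.
Qed.

Lemma nth_del1 (s : seq g) i j : (i < j)%N -> (del1 j s)`_i = s`_i.
Proof.
elim: s i j => [|x u IH] i [|j] //= Hij.
by rewrite (del1_S j x u); case: i Hij => [|i] Hij //=; apply: IH.
Qed.

Lemma size_del1 (s : seq g) i : (i < size s)%N -> size (del1 i s) = (size s).-1.
Proof.
case: s => [|x u] //; elim: u x i => [|y u IH] x [|i] Hi.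
- by rewrite del1_0.
- by [].
- by rewrite del1_0.
- rewrite (del1_S i x (y :: u)) /= IH //.
Qed.
End Del.

Section Sig.
Variable k : fieldType.
Variables (g M : lmodType k).
Variable P : g -> g.
Variable Q : M -> M.
Hypothesis QD : forall x y, Q (x + y) = Q x + Q y.
Hypothesis Q0 : Q 0 = 0.

Fixpoint sig (F : seq g -> M) (s : seq g) {struct s} : M :=
  match s with
  | [::] => F [::]
  | a :: t => sig (fun u => F (P a :: u)) t + Q (sig (fun u => F (a :: u)) t)
  end.

Lemma sig_ext s F G : (forall u, size u = size s -> F u = G u) -> sig F s = sig G s.
Proof.
elim: s F G => [|a t IH] F G H /=; first by rewrite H.
by congr (_ + Q _); apply: IH => u Hu; rewrite H //= Hu.
Qed.

Lemma sig_ext_all s F G : (forall u, F u = G u) -> sig F s = sig G s.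
Proof. by move=> H; apply: sig_ext => u _; apply: H. Qed.

Lemma sig_add s F G : sig F s + sig G s = sig (fun u => F u + G u) s.
Proof.
elim: s F G => [|a t IH] F G //=.
by rewrite -!IH QD addrACA.
Qed.

Lemma sig_map (D : M -> M) s F :
  (forall x y, D (x + y) = D x + D y) -> (forall x, D (Q x) = Q (D x)) ->
  D (sig F s) = sig (fun u => D (F u)) s.
Proof.
move=> DD DQ; elim: s F => [|a t IH] F //=.
by rewrite DD DQ !IH.
Qed.

Lemma sig_Q s F : Q (sig F s) = sig (fun u => Q (F u)) s.
Proof. by apply: sig_map. Qed.

Lemma sig0 s : sig (fun _ => 0) s = 0.
Proof. by elim: s => [|a t IH] //=; rewrite IH Q0 addr0. Qed.

Lemma sig_sum (I : Type) (r : seq I) (p : pred I) (F : I -> seq g -> M) s :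
  sig (fun u => \sum_(i <- r | p i) F i u) s = \sum_(i <- r | p i) sig (F i) s.
Proof.
elim: r => [|i r IH].
  rewrite big_nil -[RHS](sig0 s); apply: sig_ext_all => u; exact: big_nil.
rewrite big_cons -IH; case: (boolP (p i)) => pi.
  by rewrite sig_add; apply: sig_ext_all => u; rewrite big_cons pi.
by apply: sig_ext_all => u; rewrite big_cons (negbTE pi).
Qed.
Lemma sig_cons F a t : sig F (a :: t) = sig (fun u => F (P a :: u)) t + Q (sig (fun u => F (a :: u)) t).
Proof. by []. Qed.

Lemma sig_del1 s i (G : g -> seq g -> M) : (i < size s)%N ->
  sig (fun u => G u`_i (del1 i u)) s = sig (G (P s`_i)) (del1 i s) + Q (sig (G s`_i) (del1 i s)).
Proof.
elim: s i G => [|a t IH] i G // Hi.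
case: i Hi => [|i] Hi.
  rewrite sig_cons (del1_0 a t).
  by congr (_ + Q _); apply: sig_ext_all => u; rewrite del1_0.
rewrite sig_cons (del1_S i a t) sig_cons /=.
have E1 := IH i (fun y v => G y (P a :: v)) Hi.
have E2 := IH i (fun y v => G y (a :: v)) Hi.
cbv beta in E1; cbv beta in E2.
rewrite (sig_ext_all _ (G := fun u => G u`_i (P a :: del1 i u))); last first.
  by move=> u; rewrite del1_S.
rewrite [X in _ + Q X](sig_ext_all _ (G := fun u => G u`_i (a :: del1 i u))); last first.
  by move=> u; rewrite del1_S.
rewrite E1 E2 !QD.
by rewrite addrACA.
Qed.

Lemma applyP_lift a t (S : {set 'I_(size t)}) (b : bool) :
  applyP (s := a :: t) P ((if b then [set ord0] else set0) :|: [set lift ord0 i | i in S])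
  = (if b then P a else a) :: applyP P S.
Proof.
have H0 : (ord0 \in [set lift ord0 i | i in S]) = false.
  apply/imsetP => -[i _ /eqP]; by rewrite (negbTE (neq_lift _ _)).
rewrite /applyP enum_ordSl /=; congr (_ :: _).
  by rewrite in_setU H0 orbF; case: b; rewrite ?in_set1 ?eqxx ?in_set0.
rewrite -map_comp; apply: eq_map => i /=.
rewrite in_setU mem_imset; last exact: lift_inj.
have -> : (lift ord0 i \in (if b then [set ord0] else set0)) = false.
  by case: b; rewrite ?in_set1 ?in_set0 // eq_sym (negbTE (neq_lift _ _)).
by [].
Qed.

Lemma ord0_notin_lift n (S : {set 'I_n}) : (ord0 \in [set lift ord0 i | i in S]) = false.
Proof. apply/imsetP => -[i _ /eqP]; by rewrite (negbTE (neq_lift _ _)). Qed.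

Lemma hlift_in n b (S : {set 'I_n}) i :
  (lift ord0 i \in (if b then [set ord0] else set0) :|: [set lift ord0 j | j in S]) = (i \in S).
Proof.
rewrite in_setU mem_imset; last exact: lift_inj.
have -> : (lift ord0 i \in (if b then [set ord0] else set0)) = false.
  by case: b; rewrite ?in_set1 ?in_set0 // eq_sym (negbTE (neq_lift _ _)).
by [].
Qed.

Lemma hord0_in n b (S : {set 'I_n}) :
  (ord0 \in (if b then [set ord0] else set0) :|: [set lift ord0 j | j in S]) = b.
Proof. by rewrite in_setU ord0_notin_lift orbF; case: b; rewrite ?in_set1 ?eqxx ?in_set0. Qed.

Lemma hcard n b (S : {set 'I_n}) :
  #|(if b then [set ord0] else set0) :|: [set lift ord0 j | j in S]| = (b + #|S|)%N.
Proof.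
case: b => /=.
  by rewrite cardsU1 ord0_notin_lift card_imset //; exact: lift_inj.
by rewrite set0U card_imset //; exact: lift_inj.
Qed.

Lemma reidx n (b : bool) (G : {set 'I_n.+1} -> M) :
  \sum_(S : {set 'I_n.+1} | (ord0 \in S) == b) G S =
  \sum_(S' : {set 'I_n}) G ((if b then [set ord0] else set0) :|: [set lift ord0 i | i in S']).
Proof.
rewrite (reindex_onto (fun S' : {set 'I_n} => (if b then [set ord0] else set0) :|: [set lift ord0 i | i in S'])
   (fun S : {set 'I_n.+1} => [set i | lift ord0 i \in S])).
  apply: eq_bigl => S'; rewrite hord0_in eqxx /=.
  by apply/eqP/setP => i; rewrite inE hlift_in.
move=> S /eqP HS; apply/setP => i; case: (unliftP ord0 i) => [j ->|->].
  by rewrite hlift_in inE.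
by rewrite hord0_in HS.
Qed.

Lemma reidxT n (G : {set 'I_n.+1} -> M) :
  \sum_(S : {set 'I_n.+1} | ord0 \in S) G S =
  \sum_(S' : {set 'I_n}) G ((if true then [set ord0] else set0) :|: [set lift ord0 i | i in S']).
Proof.
rewrite -(reidx true); apply: eq_bigl => S; by case: (ord0 \in S).
Qed.

Lemma reidxF n (G : {set 'I_n.+1} -> M) :
  \sum_(S : {set 'I_n.+1} | ord0 \notin S) G S =
  \sum_(S' : {set 'I_n}) G ((if false then [set ord0] else set0) :|: [set lift ord0 i | i in S']).
Proof.
rewrite -(reidx false); apply: eq_bigl => S; by case: (ord0 \in S).
Qed.

Lemma Q_sum (I : Type) (r : seq I) (p : pred I) (F : I -> M) :
  Q (\sum_(i <- r | p i) F i) = \sum_(i <- r | p i) Q (F i).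
Proof. exact: (big_morph Q QD Q0). Qed.

Lemma sig_sets s F :
  \sum_(S : {set 'I_(size s)}) iter (size s - #|S|) Q (F (applyP P S)) = sig F s.
Proof.
elim: s F => [|a t IH] F.
  rewrite (big_pred1 set0); last first.
    by move=> S; apply/esym/eqP/setP => -[].
  rewrite cards0 /=; congr F; apply: size0nil; by rewrite size_map size_enum_ord.
rewrite sig_cons -!IH (bigID (fun S : {set 'I_(size t).+1} => ord0 \in S)) /=.
rewrite reidxT reidxF; congr (_ + _).
  apply: eq_bigr => S _; rewrite (hcard true) (applyP_lift a S true) //.
rewrite Q_sum; apply: eq_bigr => S _.
rewrite (hcard false) (applyP_lift a S false) add0n subSn ?iterS //.
by rewrite -[X in (_ <= X)%N](card_ord (size t)) max_card.
Qed.
End Sig.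

Lemma ab_id (V : zmodType) (A B C D E : V) : A + B + (C + D) = E + D + (A + (C + B - E)).
Proof.
rewrite [RHS]addrC -[RHS]addrA.
rewrite -(addrA (C + B)) addKr -addrA; congr (_ + _).
by rewrite addrA (addrC B C).
Qed.

Section Lin.
Variables (k : fieldType) (U V : lmodType k) (F : U -> V) (hF : lin_map F).
Lemma linD x y : F (x + y) = F x + F y.
Proof. by have := hF 1 x y; rewrite !scale1r. Qed.
Lemma lin0 : F 0 = 0.
Proof. by apply: (addrI (F 0)); rewrite -linD !addr0. Qed.
Lemma linN x : F (- x) = - F x.
Proof. by have := hF (-1) x 0; rewrite !addr0 lin0 addr0 !scaleN1r. Qed.
End Lin.

Section Main.
Variables (k : fieldType) (g M : lmodType k) (mu : g -> g -> g) (P : g -> g)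
  (act : g -> M -> M) (PM : M -> M).
Hypotheses (hNj : is_nijenhuis mu P) (hact : forall a, lin_map (act a))
  (hPM : lin_map PM) (hNjrep : is_nijenhuis_rep act P PM).

Definition Qn (x : M) := - PM x.

Lemma PMD x y : PM (x + y) = PM x + PM y.
Proof. by have := hPM 1 x y; rewrite !scale1r. Qed.
Lemma PM0 : PM 0 = 0.
Proof. by apply: (addrI (PM 0)); rewrite -PMD !addr0. Qed.
Lemma PMZ c x : PM (c *: x) = c *: PM x.
Proof. by have := hPM c x 0; rewrite !addr0 PM0 addr0. Qed.
Lemma PMN x : PM (- x) = - PM x.
Proof. by rewrite -scaleN1r PMZ scaleN1r. Qed.
Lemma QnD x y : Qn (x + y) = Qn x + Qn y.
Proof. by rewrite /Qn PMD opprD. Qed.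
Lemma Qn0 : Qn 0 = 0.
Proof. by rewrite /Qn PM0 oppr0. Qed.
Lemma QnZ c x : Qn (c *: x) = c *: Qn x.
Proof. by rewrite /Qn PMZ scalerN. Qed.
Lemma QnN x : Qn (- x) = - Qn x.
Proof. by rewrite /Qn PMN. Qed.

Lemma actD a x y : act a (x + y) = act a x + act a y.
Proof. by have := hact a 1 x y; rewrite !scale1r. Qed.
Lemma act0 a : act a 0 = 0.
Proof. by apply: (addrI (act a 0)); rewrite -actD !addr0. Qed.
Lemma actZ a c x : act a (c *: x) = c *: act a x.
Proof. by have := hact a c x 0; rewrite !addr0 act0 addr0. Qed.
Lemma actN a x : act a (- x) = - act a x.
Proof. by rewrite -scaleN1r actZ scaleN1r. Qed.

Lemma iterQ e y : (-1) ^+ e *: iter e PM y = iter e Qn y.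
Proof.
elim: e => [|e IH]; first by rewrite expr0 scale1r.
rewrite !iterS -IH exprS -scalerA /Qn PMZ.
by rewrite scaleNr scale1r.
Qed.

Lemma psi_sig F s : PsiM P PM F s = sig P Qn F s.
Proof.
rewrite /PsiM -(@sig_sets _ _ _ P Qn QnD Qn0); apply: eq_bigr => S _; exact: iterQ.
Qed.

Lemma sQ s F : Qn (sig P Qn F s) = sig P Qn (fun u => Qn (F u)) s.
Proof. exact: (sig_Q P QnD s F). Qed.
Lemma sAdd s F G : sig P Qn F s + sig P Qn G s = sig P Qn (fun u => F u + G u) s.
Proof. exact: (sig_add P QnD s F G). Qed.
Lemma sScale c s F : c *: sig P Qn F s = sig P Qn (fun u => c *: F u) s.
Proof.
apply: (@sig_map _ _ _ P Qn (fun x => c *: x) s F) => [x y|x]; [exact: scalerDr | by rewrite QnZ].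
Qed.

Lemma act_id (f : seq g -> M) s i c : (i < size s)%N ->
  sig P Qn (fun u => c *: act u`_i (f (del1 i u))) s =
  Qn (c *: act s`_i (sig P Qn f (del1 i s))) + c *: act (P s`_i) (sig P Qn f (del1 i s)).
Proof.
move=> Hi.
have E := @sig_del1 _ _ _ P Qn QnD s i (fun y v => c *: act y (f v)) Hi.
cbv beta in E; rewrite E.
set a := s`_i; set t := del1 i s.
pose D x := c *: (act (P a) x - PM (act a x)).
have DD x y : D (x + y) = D x + D y.
  by rewrite /D !actD PMD opprD addrACA scalerDr.
have DQ x : D (Qn x) = Qn (D x).
  rewrite /D QnZ; congr (_ *: _); rewrite /Qn !actN PMN opprK PMD PMN.
  by rewrite hNjrep !PMD PMN !opprD opprK addrAC addrNK.
transitivity (sig P Qn (fun v => D (f v)) t).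
  rewrite sQ sAdd; apply: sig_ext_all => v.
  by rewrite /D /Qn PMZ scalerBr.
rewrite -(@sig_map _ _ _ P Qn D t f) //.
by rewrite /D /Qn PMZ scalerBr addrC.
Qed.

Lemma br_id (f : seq g -> M) (n : nat) (hf_lin : multilinear n f) s i j c :
  (i < j)%N -> (j < size s)%N -> size s = n.+1 ->
  sig P Qn (fun u => c *: f (mu u`_i u`_j :: del2 i j u)) s =
  Qn (c *: sig P Qn f (mu s`_i s`_j :: del2 i j s)) +
  c *: sig P Qn f (bracketP mu P s`_i s`_j :: del2 i j s).
Proof.
move=> Hij Hj Hs.
rewrite (@sig_ext_all _ _ _ P Qn s _ (fun u => c *: f (mu (del1 j u)`_i u`_j :: del1 i (del1 j u)))); last first.
  by move=> u; rewrite nth_del1 // del2_del1.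
have E := @sig_del1 _ _ _ P Qn QnD s j (fun y v => c *: f (mu v`_i y :: del1 i v)) Hj.
cbv beta in E; rewrite E.
have Hi' : (i < size (del1 j s))%N.
  rewrite size_del1 // Hs /=; rewrite Hs in Hj; exact: leq_trans Hij Hj.
have E1 := @sig_del1 _ _ _ P Qn QnD (del1 j s) i (fun y w => c *: f (mu y (P s`_j) :: w)) Hi'.
have E2 := @sig_del1 _ _ _ P Qn QnD (del1 j s) i (fun y w => c *: f (mu y s`_j :: w)) Hi'.
cbv beta in E1; cbv beta in E2; rewrite E1 E2.
have Ht : size (del2 i j s) = n.-1.
  by rewrite del2_del1 // size_del1 // size_del1 ?Hs // -Hs.
rewrite nth_del1 // -del2_del1 //.
set a := s`_i; set b := s`_j; set t := del2 i j s.
rewrite !sig_cons.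
repeat (first [rewrite QnD | rewrite scalerDr | rewrite sQ | rewrite sScale]).
rewrite !sAdd.
apply: sig_ext => w Hw.
have hw : (size (Nil g) + (size w).+1)%N = n.
  rewrite Hw Ht /= prednK //; rewrite Hs in Hj.
  exact: leq_ltn_trans (leq0n i) (leq_trans Hij Hj).
have L : lin_map (fun v => f (v :: w)) := hf_lin [::] w hw.
have fD x y : f (x + y :: w) = f (x :: w) + f (y :: w) := linD L x y.
have fN x : f (- x :: w) = - f (x :: w) := linN L x.
rewrite /bracketP hNj fD fD fN.
rewrite !QnZ !QnD QnN !scalerDr /Qn ?PMN ?opprK !scalerN.
set EE := - (c *: PM (f (P (mu a b) :: w))).
have -> : c *: PM (f (P (mu a b) :: w)) = - EE by rewrite opprK.
exact: ab_id.
Qed.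

Lemma QnS (I : Type) (r : seq I) (p : pred I) (F : I -> M) :
  Qn (\sum_(i <- r | p i) F i) = \sum_(i <- r | p i) Qn (F i).
Proof. exact: (big_morph Qn QnD Qn0). Qed.

Lemma main_eq (f : seq g -> M) (n : nat) (hf_lin : multilinear n f) s :
  size s = n.+1 ->
  PsiM P PM (delta_Lie mu act f) s = delta_NjO mu act P PM (PsiM P PM f) s.
Proof.
move=> Hs.
rewrite psi_sig /delta_NjO /partialP /delta_Lie.
have CEx br ac : CE_diff br ac (PsiM P PM f) s = CE_diff br ac (sig P Qn f) s.
  rewrite /CE_diff; congr (_ + _).
    by apply: eq_bigr => i _; rewrite psi_sig.
  by apply: eq_bigr => i _; apply: eq_bigr => j _; rewrite psi_sig.
rewrite !CEx.
pose A := fun (i : 'I_(size s)) u => (-1) ^+ i *: act u`_i (f (del1 i u)).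
pose B := fun (i : 'I_(size s)) u => \sum_(j < size s | (i < j)%N)
      (-1) ^+ (i + j) *: f (mu u`_i u`_j :: del2 i j u).
transitivity (sig P Qn (fun u => \sum_(i < size s) A i u + \sum_(i < size s) B i u) s).
  by apply: sig_ext => u Hu; rewrite /CE_diff Hu.
rewrite -(sAdd s (fun u => \sum_(i < size s) A i u) (fun u => \sum_(i < size s) B i u)).
rewrite (sig_sum P QnD Qn0 _ _ A) (sig_sum P QnD Qn0 _ _ B).
have QE x : - PM x = Qn x by [].
rewrite QE /CE_diff QnD QnS QnS.
under [X in _ = _ + X + _]eq_bigr => i _ do rewrite QnS.
rewrite addrACA; congr (_ + _); rewrite -big_split; apply: eq_bigr => i _.
  by rewrite /A act_id.
rewrite /B (sig_sum P QnD Qn0) -big_split; apply: eq_bigr => j Hij.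
by rewrite (br_id hf_lin).
Qed.
End Main.

Unset Implicit Arguments.
Set Strict Implicit.

Theorem proposition6p3 (k : fieldType) (hchar : [pchar k] =i pred0)
  (g M : lmodType k) (mu : g -> g -> g) (P : g -> g)
  (act : g -> M -> M) (PM : M -> M)
  (hlie : is_lie_algebra mu) (hP : lin_map P) (hNj : is_nijenhuis mu P)
  (hrep : is_lie_rep mu act) (hPM : lin_map PM)
  (hNjrep : is_nijenhuis_rep act P PM)
  (n : nat) (f : seq g -> M)
  (hf_lin : multilinear n f) (hf_alt : alternating n f)
  (s : seq g) (hs : size s = n.+1) :
  PsiM P PM (delta_Lie mu act f) s = delta_NjO mu act P PM (PsiM P PM f) s.
Proof.
case: hrep => -[hact _] _.
exact: (main_eq hNj hact hPM hNjrep hf_lin hs).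
Qed.
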